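(* Let $N\ge 1$, $c\in\mathbb{R}$, and consider the manifold of Jacobi parameters $a_1,\dots,a_{N-1}>0$, $b_1,\dots,b_N\in\mathbb{R}$ with $\sum_{j=1}^N b_j=c$, with the Poisson bracket described in the context. Let $P_n$ be the monic orthogonal polynomials defined in the context. Then for every $n=1,2,\dots,N$ and all $x,y$, \[ \{P_n(x),P_n(y)\}=\{P_{n-1}(x),P_{n-1}(y)\}=0, \] \[ 2\{P_n(x),P_{n-1}(y)\} = \frac{P_n(x)P_{n-1}(y)-P_n(y)P_{n-1}(x)}{x-y} - P_{n-1}(x)P_{n-1}(y). \]
   Context: The Poisson bracket on functions of $(a_1,\dots,a_{N-1},b_1,\dots,b_N)$ is the bilinear antisymmetric bracket satisfying the Leibniz rule whose only nonzero brackets among the coordinates are $\{b_k,a_k\}=-\tfrac14 a_k$ for $k=1,\dots,N-1$ and $\{b_k,a_{k-1}\}=\tfrac14 a_{k-1}$ for $k=2,\dots,N$. Brackets of functions depending on auxiliary variables $x,y$ are computed with $x,y$ held fixed; the identity with the difference quotient is understood as an identity of polynomials in $x,y$. The monic polynomials are defined by $P_{-1}=0$, $P_0=1$, $P_{j+1}(x)=(x-b_{j+1})P_j(x)-a_j^2P_{j-1}(x)$; equivalently $P_n(x)=\det(x-J_n)$ where $J_n$ is the $n\times n$ tridiagonal matrix with diagonal $b_1,\dots,b_n$ and off-diagonal entries $a_1,\dots,a_{n-1}$. *)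

(* Defs.v *)
From HB Require Import structures.
From mathcomp Require Import all_boot all_order all_algebra.
From mathcomp Require Import reals.
From mathcomp Require Import mpoly.
Set Implicit Arguments. Unset Strict Implicit. Unset Printing Implicit Defensive.
Import Order.TTheory GRing.Theory Num.Theory.
Local Open Scope ring_scope.

(* Ambient coordinates for a given N, as variables of {mpoly R[(2N).+1]}:
     a_k  (k = 1..N-1)  is variable number k-1,
     b_k  (k = 1..N)    is variable number (N-1)+(k-1),
     x                  is variable number 2N-1,
     y                  is variable number 2N.                          *)
Section Jacobi.
Variables (R : realType) (N : nat).
Notation nv := (N.*2).+1.
Notation MP := {mpoly R[nv]}.

Definition ia (k : nat) : 'I_nv := inord k.-1.
Definition ib (k : nat) : 'I_nv := inord (N.-1 + k.-1).
Definition ix : 'I_nv := inord (N.*2.-1).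
Definition iy : 'I_nv := inord (N.*2).

Definition va (k : nat) : MP := 'X_(ia k).
Definition vb (k : nat) : MP := 'X_(ib k).
Definition vx : MP := 'X_ix.
Definition vy : MP := 'X_iy.

(* The Poisson bracket: the unique bilinear antisymmetric biderivation with
   {b_k, a_k} = -a_k/4 (k = 1..N-1), {b_k, a_(k-1)} = a_(k-1)/4 (k = 2..N),
   all other brackets of coordinates (and anything with x, y) being 0:
   {f,g} = sum_{u,v coordinates} (df/du) (dg/dv) {u,v}. *)
Definition pbr (f g : MP) : MP :=
  \sum_(1 <= k < N)
    ( (mderiv (ib k) f * mderiv (ia k) g - mderiv (ia k) f * mderiv (ib k) g)
        * (- (va k * ((4%:R)^-1 : R)%:MP))
    + (mderiv (ib k.+1) f * mderiv (ia k) g - mderiv (ia k) f * mderiv (ib k.+1) g)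
        * (va k * ((4%:R)^-1 : R)%:MP) ).

(* Ppair z j = (P_(j-1)(z), P_j(z)), with P_(-1) = 0, P_0 = 1,
   P_(j+1)(z) = (z - b_(j+1)) P_j(z) - a_j^2 P_(j-1)(z). *)
Fixpoint Ppair (z : MP) (j : nat) : MP * MP :=
  match j with
  | 0 => (0, 1)
  | j'.+1 => let: (p, q) := Ppair z j' in
             (q, (z - vb j'.+1) * q - (if j' is 0 then 0 else va j' ^+ 2) * p)
  end.

Definition P (j : nat) (z : MP) : MP := (Ppair z j).2.

(* Restriction to a point (a, b) of the phase space: the coordinates a_k, b_k
   are replaced by the numbers a k, b k; x, y become the two variables of
   {mpoly R[2]} ('X_0 and 'X_1). *)
Definition evpt_var (a b : nat -> R) (i : 'I_nv) : {mpoly R[2]} :=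
  if (i < N.-1)%N then (a i.+1)%:MP
  else if (i < N.*2.-1)%N then (b (i - N.-1).+1)%:MP
  else if i == ix then 'X_(ord0 : 'I_2) else 'X_(ord_max : 'I_2).

Definition evpt (a b : nat -> R) (f : MP) : {mpoly R[2]} :=
  comp_mpoly [tuple evpt_var a b i | i < nv] f.

End Jacobi.

(* Main.v *)
Require Import Defs.
From HB Require Import structures.
From mathcomp Require Import all_boot all_order all_algebra.
From mathcomp Require Import reals.
From mathcomp Require Import mpoly.
From mathcomp Require Import ring zify.
Import Order.TTheory GRing.Theory Num.Theory.
Local Open Scope ring_scope.

Lemma mderivXU (n : nat) (R : ringType) (i j : 'I_n) :
  mderiv i ('X_j : {mpoly R[n]}) = (j == i)%:R.
Proof.
rewrite mderivX mnm1E; case: eqP => [->|_]; last by rewrite scale0r.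
have -> : (U_(i) - U_(i))%MM = 0%MM by apply/mnmP=> k; rewrite mnmBE subnn mnm0E.
by rewrite mpolyX0 scale1r.
Qed.

Section S.
Variables (R : realType) (N : nat).
Hypothesis hN : (1 <= N)%N.
Notation nv := (N.*2).+1.
Notation MP := {mpoly R[nv]}.

Lemma val_ia k : (k <= N)%N -> nat_of_ord (ia N k) = k.-1.
Proof. move=> hk; rewrite /ia inordK //; lia. Qed.
Lemma val_ib k : (k <= N.+1)%N -> nat_of_ord (ib N k) = (N.-1 + k.-1)%N.
Proof. move=> hk; rewrite /ib inordK //; lia. Qed.
Lemma val_ix : nat_of_ord (ix N) = N.*2.-1.
Proof. rewrite /ix inordK //; lia. Qed.
Lemma val_iy : nat_of_ord (iy N) = N.*2.
Proof. rewrite /iy inordK //; lia. Qed.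

Definition c : MP := ((4%:R)^-1 : R)%:MP.
Lemma c4 : 4%:R * c = 1.
Proof. by rewrite /c -mpolyC_nat -mpolyCM mulfV ?pnatr_eq0 // mpolyC1. Qed.

Notation br := (@pbr R N).
Notation d := mderiv.

Lemma pbrM1 f g h : br (f * g) h = f * br g h + g * br f h.
Proof.
rewrite /pbr !mulr_sumr -big_split /=; apply: eq_bigr => k _.
rewrite !mderivM; ring.
Qed.

Lemma pbrB1 f g h : br (f - g) h = br f h - br g h.
Proof.
rewrite /pbr -sumrB; apply: eq_bigr => k _; rewrite !mderivB; ring.
Qed.

Lemma pbrA f g : br f g = - br g f.
Proof. rewrite /pbr -sumrN; apply: eq_bigr => k _; ring. Qed.

Lemma pbrM2 f g h : br h (f * g) = f * br h g + g * br h f.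
Proof. by rewrite pbrA pbrM1 (pbrA h g) (pbrA h f); ring. Qed.

Lemma pbrB2 f g h : br h (f - g) = br h f - br h g.
Proof. by rewrite pbrA pbrB1 (pbrA h g) (pbrA h f); ring. Qed.

Lemma pbrff f : br f f = 0.
Proof. rewrite /pbr big1 // => k _; ring. Qed.

Definition inert (f : MP) :=
  (forall k, (1 <= k < N)%N -> d (ia N k) f = 0) /\
  (forall k, (1 <= k <= N)%N -> d (ib N k) f = 0).

Lemma pbr_inert f g : inert f -> br f g = 0.
Proof.
move=> [ha hb]; rewrite /pbr big1_seq // => k; rewrite mem_index_iota => hk.
rewrite ha ?hb //; try lia. ring.
Qed.

Lemma ia_ib k j : (1 <= k < N)%N -> (1 <= j <= N.+1)%N -> (ia N k == ib N j) = false.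
Proof. move=> hk hj; rewrite -val_eqE /= val_ia; last lia. rewrite val_ib; last lia. apply/eqP; lia. Qed.
Lemma ib_ia k j : (1 <= k < N)%N -> (1 <= j <= N.+1)%N -> (ib N j == ia N k) = false.
Proof. by move=> hk hj; rewrite eq_sym ia_ib. Qed.
Lemma ia_ia k j : (1 <= k <= N)%N -> (1 <= j <= N)%N -> (ia N k == ia N j) = (k == j).
Proof. move=> hk hj; rewrite -val_eqE /= val_ia; last lia. rewrite val_ia; last lia. apply/eqP/eqP; lia. Qed.
Lemma ib_ib k j : (1 <= k <= N.+1)%N -> (1 <= j <= N.+1)%N -> (ib N k == ib N j) = (k == j).
Proof. move=> hk hj; rewrite -val_eqE /= val_ib; last lia. rewrite val_ib; last lia. apply/eqP/eqP; lia. Qed.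

Lemma inert_x : inert (vx R N).
Proof.
split=> k hk; rewrite /vx mderivXU -val_eqE /= val_ix ?val_ia ?val_ib; try lia;
  case: eqP => //; lia.
Qed.
Lemma inert_y : inert (vy R N).
Proof.
split=> k hk; rewrite /vy mderivXU -val_eqE /= val_iy ?val_ia ?val_ib; try lia;
  case: eqP => //; lia.
Qed.
Lemma inertC (x : R) : inert x%:MP.
Proof. by split=> k _; rewrite mderivC. Qed.
Lemma inert1 : inert 1.
Proof. by rewrite -mpolyC1; apply: inertC. Qed.
Lemma inert0 : inert 0.
Proof. by rewrite -mpolyC0; apply: inertC. Qed.

Lemma pbr_va j g : (1 <= j < N)%N ->
  br (va R N j) g = va R N j * c * (d (ib N j) g - d (ib N j.+1) g).
Proof.
move=> hj; rewrite /pbr (bigD1_seq j) ?iota_uniq ?mem_index_iota //= big1_seq.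
  rewrite /va !mderivXU eqxx !ia_ib //; try lia. rewrite /c /=; ring.
move=> k /andP[hkj]; rewrite mem_index_iota => hk.
rewrite /va !mderivXU !ia_ib ?ia_ia //; try lia. rewrite eq_sym (negbTE hkj) /=; ring.
Qed.

Lemma pbr_vb j g : (1 <= j <= N)%N ->
  (forall k, (1 <= k < N)%N -> (k = j \/ k.+1 = j) -> d (ia N k) g = 0) ->
  br (vb R N j) g = 0.
Proof.
move=> hj hg; rewrite /pbr big1_seq // => k; rewrite mem_index_iota => hk.
rewrite /vb !mderivXU !ib_ia; try lia.
have [hkj0|hkj] := eqVneq k j; first by rewrite hg /=; [ring | lia | left].
have [hkj0|hkj'] := eqVneq k.+1 j; first by rewrite hg /=; [ring | lia | right].
rewrite !ib_ib; try lia. rewrite eq_sym (negbTE hkj) eq_sym (negbTE hkj') /=. ring.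
Qed.

Definition pr (n : nat) (z : MP) : MP := (Ppair z n).1.
Definition An (n : nat) : MP := if n is 0 then 0 else va R N n ^+ 2.

Lemma P0 (z : MP) : P 0 z = 1. Proof. by []. Qed.
Lemma pr0 (z : MP) : pr 0 z = 0. Proof. by []. Qed.
Lemma PS n (z : MP) : P n.+1 z = (z - vb R N n.+1) * P n z - An n * pr n z.
Proof. by rewrite /P /pr /An /=; case: (Ppair z n). Qed.
Lemma prS n (z : MP) : pr n.+1 z = P n z.
Proof. by rewrite /P /pr /=; case: (Ppair z n). Qed.

Definition good (i : 'I_nv) m :=
  (exists2 k, (1 <= k /\ m <= k < N)%N & i = ia N k) \/
  (exists2 k, (m < k <= N)%N & i = ib N k).

Lemma good_z i m (z : MP) : inert z -> good i m -> d i z = 0.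
Proof.
move=> [ha hb] [[k hk ->]|[k hk ->]]; [apply: ha | apply: hb]; lia.
Qed.

Lemma dAn i m : (m < N)%N -> good i m.+1 -> d i (An m) = 0.
Proof.
case: m => [|m] hm hg; first by rewrite /An mderiv0.
rewrite /An expr2 mderivM /va mderivXU.
case: hg => [[k hk ->]|[k hk ->]]; rewrite ?ia_ia ?ia_ib; try lia.
  have -> : (m.+1 == k) = false by apply/eqP; lia.
  by rewrite /= mul0r mulr0 addr0.
by rewrite /= mul0r mulr0 addr0.
Qed.

Lemma dvb i m : (m < N)%N -> good i m.+1 -> d i (vb R N m.+1) = 0.
Proof.
move=> hm hg; rewrite /vb mderivXU.
case: hg => [[k hk ->]|[k hk ->]]; rewrite ?ib_ia ?ib_ib; try lia; first by [].
by have -> : (m.+1 == k) = false by apply/eqP; lia.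
Qed.

Lemma good_mono i m : good i m.+1 -> good i m.
Proof. by case=> [[k hk ->]|[k hk ->]]; [left|right]; exists k => //; lia. Qed.

Lemma dP (z : MP) m : inert z -> (m <= N)%N -> forall i, good i m ->
  d i (P m z) = 0 /\ d i (pr m z) = 0.
Proof.
move=> hz; elim: m => [|m IH] hm i hg.
  by rewrite P0 pr0 -mpolyC1 mderivC mderiv0.
have [IH1 IH2] := IH (ltnW hm) i (good_mono _ _ hg).
rewrite PS prS; split=> //.
rewrite !(mderivB, mderivM) IH1 IH2 (good_z _ _ _ hz (good_mono _ _ hg)) (dvb _ _ hm hg) (dAn _ _ hm hg).
ring.
Qed.

Lemma dPn (z : MP) m : inert z -> (1 <= m <= N)%N ->
  d (ib N m) (P m z) = - P m.-1 z.
Proof.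
case: m => [|m] // hz hm.
have hg : good (ib N m.+1) m by right; exists m.+1 => //; lia.
have [h1 h2] := dP _ _ hz (ltnW hm) _ hg.
rewrite PS !(mderivB, mderivM) h1 h2 (good_z _ _ _ hz hg).
rewrite /vb mderivXU eqxx.
have -> : d (ib N m.+1) (An m) = 0.
  case: m hm {hg h1 h2} => [|m] hm; first by rewrite /An mderiv0.
  rewrite /An expr2 mderivM /va mderivXU ia_ib; try lia. by rewrite /= mul0r mulr0 addr0.
rewrite /=; ring.
Qed.

Lemma pbr0 g : br 0 g = 0.
Proof. exact: pbr_inert inert0. Qed.

Lemma L1 (z : MP) n : inert z -> (n < N)%N ->
  br (vb R N n.+1) (P n z) = 0 /\ br (vb R N n.+1) (pr n z) = 0.
Proof.
move=> hz hn.
have H k : (1 <= k < N)%N -> (k = n.+1 \/ k.+1 = n.+1) ->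
    d (ia N k) (P n z) = 0 /\ d (ia N k) (pr n z) = 0.
  move=> hk hk'; apply: dP => //; first lia.
  by left; exists k => //; lia.
split; apply: pbr_vb; try lia; move=> k hk hk'; by have [] := H k hk hk'.
Qed.

Lemma L2 (z : MP) n : inert z -> (n < N)%N ->
  br (An n) (pr n z) = 0 /\ br (An n) (P n z) = - 2%:R * An n * c * pr n z.
Proof.
move=> hz; case: n => [|m] hn.
  by rewrite /An !pbr0; split=> //; ring.
rewrite /An expr2 !pbrM1 !pbr_va; try lia.
have g1 : good (ib N m.+2) m.+1 by right; exists m.+2 => //; lia.
have g2 : good (ib N m.+2) m by right; exists m.+2 => //; lia.
have g3 : good (ib N m.+1) m by right; exists m.+1 => //; lia.
have [e1 _] := dP _ _ hz (ltnW hn) _ g1.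
have [e2 _] := dP _ _ hz (ltnW (ltnW hn)) _ g2.
have [e3 _] := dP _ _ hz (ltnW (ltnW hn)) _ g3.
rewrite prS e1 e2 e3 dPn //; last lia.
split; rewrite /c /=; ring.
Qed.

Lemma L3 n : (n < N)%N -> br (vb R N n.+1) (An n) = 2%:R * An n * c.
Proof.
case: n => [|m] hn.
  by rewrite /An pbrA pbr0 oppr0 mulr0 mul0r.
rewrite /An expr2 pbrM2 (pbrA _ (va R N m.+1)) pbr_va; last lia.
rewrite /vb !mderivXU ib_ib ?eqxx; try lia.
have -> : (m.+2 == m.+1) = false by apply/eqP; lia.
rewrite /c /=; ring.
Qed.

Lemma lc2 (l r e1 e2 f1 f2 k1 k2 : MP) : e1 = e2 -> f1 = f2 ->
  l - r = k1 * (e1 - e2) + k2 * (f1 - f2) -> l = r.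
Proof. by move=> -> ->; rewrite !subrr !mulr0 addr0 => /eqP; rewrite subr_eq0 => /eqP. Qed.

Lemma main (z w : MP) : inert z -> inert w -> forall n, (n <= N)%N ->
  [/\ br (P n z) (P n w) = 0, br (pr n z) (pr n w) = 0,
      br (P n z) (pr n w) = br (P n w) (pr n z) &
      (z - w) * (2%:R * br (P n z) (pr n w) + pr n z * pr n w)
        = P n z * pr n w - P n w * pr n z].
Proof.
move=> hz hw; elim=> [|n IH] hn.
  have i1 g : br 1 g = 0 by apply: pbr_inert inert1.
  rewrite !P0 !pr0 !pbr0 !i1; split=> //; ring.
have hn' : (n < N)%N by [].
have [IHa IHb IHc IHd] := IH (ltnW hn).
have z1 g : br z g = 0 by apply: pbr_inert.
have z2 g : br g z = 0 by rewrite pbrA z1 oppr0.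
have w1 g : br w g = 0 by apply: pbr_inert.
have w2 g : br g w = 0 by rewrite pbrA w1 oppr0.
have [bp bp'] := L1 _ _ hz hn'.
have [bq bq'] := L1 _ _ hw hn'.
have [Ap' Ap] := L2 _ _ hz hn'.
have [Aq' Aq] := L2 _ _ hw hn'.
have bA := L3 _ hn'.
have pb : br (P n z) (vb R N n.+1) = 0 by rewrite pbrA bp oppr0.
have p'b : br (pr n z) (vb R N n.+1) = 0 by rewrite pbrA bp' oppr0.
have qb : br (P n w) (vb R N n.+1) = 0 by rewrite pbrA bq oppr0.
have q'b : br (pr n w) (vb R N n.+1) = 0 by rewrite pbrA bq' oppr0.
have p'A : br (pr n z) (An n) = 0 by rewrite pbrA Ap' oppr0.
have q'A : br (pr n w) (An n) = 0 by rewrite pbrA Aq' oppr0.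
have pA : br (P n z) (An n) = 2%:R * An n * c * pr n z by rewrite pbrA Ap; ring.
have qA : br (P n w) (An n) = 2%:R * An n * c * pr n w by rewrite pbrA Aq; ring.
have Ab : br (An n) (vb R N n.+1) = - (2%:R * An n * c) by rewrite pbrA bA.
have qp : br (P n w) (P n z) = 0 by rewrite pbrA IHa oppr0.
have q'p' : br (pr n w) (pr n z) = 0 by rewrite pbrA IHb oppr0.
have q'p : br (pr n w) (P n z) = - br (P n z) (pr n w) by rewrite pbrA.
have p'q : br (pr n z) (P n w) = - br (P n z) (pr n w) by rewrite pbrA IHc.
have bb := pbrff (vb R N n.+1).
have AA := pbrff (An n).
rewrite !PS !prS.
rewrite !(pbrB1, pbrM1, pbrB2, pbrM2).
rewrite !(z1, z2, w1, w2, bp, bp', bq, bq', Ap', Ap, Aq', Aq, bA, pb, p'b, qb, q'b,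
  p'A, q'A, pA, qA, Ab, qp, q'p', q'p, p'q, bb, AA, IHa, IHb).
try rewrite -IHc.
split=> //.
- apply: (lc2 _ _ _ _ _ _ (-2%:R * An n * c) (An n * (z - w) * br (P n z) (pr n w)) IHd c4).
  ring.
- ring.
- apply: (lc2 _ _ _ _ _ _ (An n) (An n * (z - w) * pr n z * pr n w) IHd c4).
  ring.
Qed.
End S.

Lemma evX (R : realType) (N : nat) (a b : nat -> R) : (1 <= N)%N ->
  evpt a b (vx R N) = 'X_(ord0 : 'I_2).
Proof.
move=> hN; rewrite /evpt /vx comp_mpolyXU -tnth_nth tnth_mktuple /evpt_var.
rewrite val_ix // eqxx.
have -> : (N.*2.-1 < N.-1)%N = false by apply/negbTE; rewrite -leqNgt; lia.
by have -> : (N.*2.-1 < N.*2.-1)%N = false by rewrite ltnn.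
Qed.

Lemma evY (R : realType) (N : nat) (a b : nat -> R) : (1 <= N)%N ->
  evpt a b (vy R N) = 'X_(ord_max : 'I_2).
Proof.
move=> hN; rewrite /evpt /vy comp_mpolyXU -tnth_nth tnth_mktuple /evpt_var.
rewrite val_iy //.
have -> : (N.*2 < N.-1)%N = false by apply/negbTE; rewrite -leqNgt; lia.
have -> : (N.*2 < N.*2.-1)%N = false by apply/negbTE; rewrite -leqNgt; lia.
have -> : (iy N == ix N) = false.
  by apply/negbTE; rewrite -val_eqE /= val_ix // val_iy //; apply/eqP; lia.
by [].
Qed.

Theorem theorem2p3 (R : realType) (N : nat) (c : R) (hN : (1 <= N)%N)
  (a b : nat -> R)
  (ha : forall k, (1 <= k < N)%N -> 0 < a k)
  (hb : \sum_(1 <= j < N.+1) b j = c)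
  (n : nat) (hn : (1 <= n <= N)%N) :
  let X := vx R N in
  let Y := vy R N in
  let ev := evpt a b in
  [/\ ev (pbr (P n X) (P n Y)) = 0,
      ev (pbr (P n.-1 X) (P n.-1 Y)) = 0 &
      exists Q : {mpoly R[2]},
        ('X_(ord0 : 'I_2) - 'X_(ord_max : 'I_2)) * Q
          = ev (P n X * P n.-1 Y - P n Y * P n.-1 X)
        /\ 2%:R * ev (pbr (P n X) (P n.-1 Y)) = Q - ev (P n.-1 X * P n.-1 Y)].
Proof.
move=> X Y ev.
have [Ma Mb Mc Md] := main R N hN X Y (inert_x R N hN) (inert_y R N hN) n (proj2 (andP hn)).
case: n hn Ma Mb Mc Md => [//|m] hn Ma Mb Mc Md /=.
rewrite -!(prS R N m).
have hm : {morph ev : x y / x * y} by move=> x y; rewrite /ev /evpt rmorphM.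
have hB : {morph ev : x y / x - y} by move=> x y; rewrite /ev /evpt rmorphB.
have hD : {morph ev : x y / x + y} by move=> x y; rewrite /ev /evpt rmorphD.
have h0 : ev 0 = 0 by rewrite /ev /evpt rmorph0.
have h2 : ev 2%:R = 2%:R by rewrite /ev /evpt rmorph_nat.
split; first by rewrite Ma h0.
  by rewrite Mb h0.
exists (ev (2%:R * pbr (P m.+1 X) (pr R N m.+1 Y) + pr R N m.+1 X * pr R N m.+1 Y)).
split.
  by rewrite -Md hm hB /ev evX // evY.
by rewrite hD hm h2 addrK.
Qed.
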